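(* Let $X$ be a finite simplicial complex, $d\ge 0$, $K_d$ an anti-coloring of $X_d$, and $\Delta_{K_d}\subseteq C_d(X)$ the corresponding anti-synchrony subspace. Fix partitions $\mathcal{P}$ of $X_{d+1}$ and $\mathcal{Q}$ of $X_{d-1}$. Then: (1) $\Delta_{K_d}$ is invariant under $B_{d+1}FB_{d+1}^\intercal$ for all $F\in\mathcal{W}^{d+1}_{\mathcal P}$ if and only if $K_d$ is up-balanced with respect to $\mathcal{P}$; (2) $\Delta_{K_d}$ is invariant under $B_d^\intercal HB_d$ for all $H\in\mathcal{W}^{d-1}_{\mathcal Q}$ if and only if $K_d$ is down-balanced with respect to $\mathcal{Q}$.
   Context: A finite simplicial complex $X$ on vertex set $\{1,\dots,n\}$ is a collection of nonempty subsets closed under taking nonempty subsets; $X_d$ is the set of simplices with $d+1$ vertices; a $d$-simplex with vertices $i_0<\dots<i_d$ is written $[i_0,\dots,i_d]$. $C_d(X)$ is the real vector space with basis $X_d$ (coordinates $x_s$, $s\in X_d$) and inner product making $X_d$ orthonormal ($C_{-1}(X)=0$). The boundary map is $\partial_d[i_0,\dots,i_d]=\sum_{k=0}^d(-1)^k[i_0,\dots,\widehat{i_k},\dots,i_d]$ with matrix $B_d$. For $t\in X_{D}$, $e\in X_{D-1}$, $I^t_e\in\{0,1,-1\}$ is the coefficient of $e$ in $\partial_D t$ (so $I_e^t=(B_D)_{et}$). For a partition $\mathcal P=(P_1,\dots,P_k)$ of $X_D$, $\mathcal{W}^D_{\mathcal P}$ is the set of maps $F:C_D(X)\to C_D(X)$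 with $(F(x))_s=F_s(x_s)$ for odd functions $F_s:\mathbb{R}\to\mathbb{R}$ such that $F_s=F_t$ whenever $s,t$ lie in the same class $P_i$. Let $\mathcal K$ be a finite set of colors, $\mathbb{Z}\mathcal K$ the free $\mathbb{Z}$-module with basis $\mathcal K$, and $\mathbf B_{\mathcal K}=\{k,-k:k\in\mathcal K\}\cup\{0\}\subseteq\mathbb{Z}\mathcal K$. An anti-coloring of $X_d$ is a map $K_d:X_d\to\mathbf B_{\mathcal K}$. Its anti-synchrony space is $\Delta_{K_d}=\{x\in C_d(X): x_s=x_t \text{ if } K_d(s)=K_d(t),\ x_s=-x_t \text{ if } K_d(s)=-K_d(t)\}$ (so $x_s=0$ if $K_d(s)=0$). Induced colorings: $K_d^{\uparrow}:X_{d+1}\to\mathbb{Z}\mathcal K$, $K_d^{\uparrow}(t)=\sum_{e\in X_d}I^t_eK_d(e)$, and $K_d^{\downarrow}:X_{d-1}\to\mathbb{Z}\mathcal K$, $K_d^{\downarrow}(v)=\sum_{e\in X_d}I^e_vK_d(e)$. For a partition $\mathcal P=(P_1,\dots,P_k)$ of $X_{d+1}$, $e\in X_d$, a class $P_i$ and $a\in\mathbb{Z}\mathcal K$, put $U_i^a(e)=\sum_{t\in P_i,\,K^{\uparrow}_d(t)=a}I^t_e-\sum_{t\in P_i,\,K^{\uparrow}_d(t)=-a}I^t_e$. $K_d$ is up-balanced with respect to $\mathcal P$ if for all $e,f\in X_d$, all classes $P_i$ and all $a\in\mathbb{Z}\mathcal K$: $U_i^a(e)=U_i^a(f)$ whenever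 $K_d(e)=K_d(f)$, and $U_i^a(e)=-U_i^a(f)$ whenever $K_d(e)=-K_d(f)$. For a partition $\mathcal Q=(Q_1,\dots,Q_l)$ of $X_{d-1}$, put $D_j^a(e)=\sum_{v\in Q_j,\,K^{\downarrow}_d(v)=a}I^e_v-\sum_{v\in Q_j,\,K^{\downarrow}_d(v)=-a}I^e_v$. $K_d$ is down-balanced with respect to $\mathcal Q$ if for all $e,f\in X_d$, all classes $Q_j$ and all $a\in\mathbb{Z}\mathcal K$: $D_j^a(e)=D_j^a(f)$ whenever $K_d(e)=K_d(f)$, and $D_j^a(e)=-D_j^a(f)$ whenever $K_d(e)=-K_d(f)$. A subspace $W$ is invariant under a map $G$ if $G(W)\subseteq W$. *)

(* Defs.v *)
From HB Require Import structures.
From mathcomp Require Import all_boot all_order all_algebra.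
From mathcomp Require Import reals.
Set Implicit Arguments. Unset Strict Implicit. Unset Printing Implicit Defensive.
Import Order.TTheory GRing.Theory Num.Theory.
Local Open Scope ring_scope.

Section Defs.
Variable n : nat.
(* Vertex set {1,...,n} is modelled by 'I_n (same linear order). Simplices are
   finite sets of vertices. *)
Notation simplex := {set 'I_n}.

Definition is_complex (X : {set simplex}) : Prop :=
  (forall s : simplex, s \in X -> s != set0) /\
  (forall s t : simplex, s \in X -> t \subset s -> t != set0 -> t \in X).

(* simplices of X with exactly k vertices: X_d = simp X d.+1 *)
Definition simp (X : {set simplex}) (k : nat) : {set simplex} :=
  [set s in X | #|s| == k].

(* I^t_e : coefficient of e in boundary of t.  If t = [i_0,...,i_D] and
   e = t minus i_k then (-1)^k, where k = #{x in t | x < i_k}; 0 otherwise. *)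
Definition incid (t e : simplex) : int :=
  \sum_(v in t | e == t :\ v) (-1) ^+ #|[set x in t | (val x < val v)%N]|.

Definition ZK (K : finType) := {ffun K -> int}.
Definition gen (K : finType) (k : K) : ZK K := [ffun j => (j == k)%:Z].
Definition inBK (K : finType) (c : ZK K) : bool :=
  (c == 0) || [exists k, (c == gen k) || (c == - gen k)].

Variable K : finType.

Definition anti_coloring (X : {set simplex}) (d : nat) (Kd : simplex -> ZK K) : Prop :=
  forall s, s \in simp X d.+1 -> inBK (Kd s).

Variable R : realType.

(* vectors of C_d(X): functions supported on X_d; anti-synchrony space *)
Definition Delta (X : {set simplex}) (d : nat) (Kd : simplex -> ZK K)
    (x : simplex -> R) : Prop :=
  (forall s, s \notin simp X d.+1 -> x s = 0) /\
  (forall s t, s \in simp X d.+1 -> t \in simp X d.+1 ->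
     (Kd s = Kd t -> x s = x t) /\ (Kd s = - Kd t -> x s = - x t)).

Definition is_invariant (X : {set simplex}) (d : nat) (Kd : simplex -> ZK K)
    (G : (simplex -> R) -> (simplex -> R)) : Prop :=
  forall x, Delta X d Kd x -> Delta X d Kd (G x).

(* W^D_P with D+1 = k vertices: coordinatewise odd maps, constant on classes *)
Definition Wset (X : {set simplex}) (k : nat) (P : {set {set simplex}})
    (F : simplex -> R -> R) : Prop :=
  (forall s, s \in simp X k -> forall r, F s (- r) = - F s r) /\
  (forall Pi, Pi \in P -> forall s t, s \in Pi -> t \in Pi -> F s = F t).

Definition upmap (X : {set simplex}) (d : nat) (F : simplex -> R -> R)
    (x : simplex -> R) : simplex -> R := fun e =>
  if e \in simp X d.+1 then
    \sum_(t in simp X d.+2) (incid t e)%:~R *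
        F t (\sum_(e' in simp X d.+1) (incid t e')%:~R * x e')
  else 0.

Definition downmap (X : {set simplex}) (d : nat) (H : simplex -> R -> R)
    (x : simplex -> R) : simplex -> R := fun e =>
  if e \in simp X d.+1 then
    \sum_(v in simp X d) (incid e v)%:~R *
        H v (\sum_(e' in simp X d.+1) (incid e' v)%:~R * x e')
  else 0.

Definition up_col (X : {set simplex}) (d : nat) (Kd : simplex -> ZK K) (t : simplex) : ZK K :=
  \sum_(e in simp X d.+1) Kd e *~ incid t e.
Definition down_col (X : {set simplex}) (d : nat) (Kd : simplex -> ZK K) (v : simplex) : ZK K :=
  \sum_(e in simp X d.+1) Kd e *~ incid e v.

Definition Uia (X : {set simplex}) (d : nat) (Kd : simplex -> ZK K)
    (Pi : {set simplex}) (a : ZK K) (e : simplex) : int :=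
  \sum_(t in Pi | up_col X d Kd t == a) incid t e
  - \sum_(t in Pi | up_col X d Kd t == - a) incid t e.
Definition Dja (X : {set simplex}) (d : nat) (Kd : simplex -> ZK K)
    (Qj : {set simplex}) (a : ZK K) (e : simplex) : int :=
  \sum_(v in Qj | down_col X d Kd v == a) incid e v
  - \sum_(v in Qj | down_col X d Kd v == - a) incid e v.

Definition up_balanced (X : {set simplex}) (d : nat) (Kd : simplex -> ZK K)
    (P : {set {set simplex}}) : Prop :=
  forall e f, e \in simp X d.+1 -> f \in simp X d.+1 ->
  forall Pi, Pi \in P -> forall a : ZK K,
    (Kd e = Kd f -> Uia X d Kd Pi a e = Uia X d Kd Pi a f) /\
    (Kd e = - Kd f -> Uia X d Kd Pi a e = - Uia X d Kd Pi a f).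

Definition down_balanced (X : {set simplex}) (d : nat) (Kd : simplex -> ZK K)
    (Q : {set {set simplex}}) : Prop :=
  forall e f, e \in simp X d.+1 -> f \in simp X d.+1 ->
  forall Qj, Qj \in Q -> forall a : ZK K,
    (Kd e = Kd f -> Dja X d Kd Qj a e = Dja X d Kd Qj a f) /\
    (Kd e = - Kd f -> Dja X d Kd Qj a e = - Dja X d Kd Qj a f).
End Defs.

(* Main.v *)
Require Import Defs.
From HB Require Import structures.
From mathcomp Require Import all_boot all_order all_algebra.
From mathcomp Require Import reals.
From mathcomp Require Import ring lra zify.
Set Implicit Arguments. Unset Strict Implicit. Unset Printing Implicit Defensive.
Import Order.TTheory GRing.Theory Num.Theory.
Local Open Scope ring_scope.

Lemma base_nz (M : int) m (f : 'I_m -> int) : (forall i, `|f i| < M) ->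
  (exists i, f i != 0) -> \sum_(i < m) f i * M ^+ i != 0.
Proof.
elim: m f => [|m IH] f hb [i hi]; first by move: (ltn_ord i); rewrite ltn0.
rewrite big_ord_recl expr0 mulr1.
under eq_bigr => j _ do rewrite lift0 exprS mulrCA.
rewrite -big_distrr /=.
case: (boolP [exists j, f (lift ord0 j) != 0]) => [/existsP hex | hnex].
  have := IH _ (fun j => hb _) hex.
  set S := \sum_(j < m) _ => hS.
  have hf0 := hb ord0.
  have hS1 : 0 < `|S| by rewrite normr_gt0.
  apply/negP => /eqP h0.
  have h1 : M * S = - f ord0 by apply/eqP; rewrite -addr_eq0 addrC h0.
  have : `|M * S| = `|f ord0| by rewrite h1 normrN.
  rewrite normrM gtr0_norm; last by apply: le_lt_trans hf0.
  move=> h2; move: hf0; rewrite -h2.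
  have hM : 0 < M by apply: le_lt_trans (hb ord0).
  nia.
rewrite big1 ?mulr0 ?addr0 => [|j _]; last first.
  move: hnex; rewrite negb_exists => /forallP /(_ j); rewrite negbK => /eqP ->.
  by rewrite mul0r.
case: (unliftP ord0 i) => [j eqi|eqi]; rewrite eqi in hi => //.
by move: hnex; rewrite negb_exists => /forallP /(_ j); rewrite hi.
Qed.

Lemma psi_nz (K : finType) (M : int) (c : ZK K) : (forall k, `|c k| < M) ->
  c != 0 -> \sum_k c k * M ^+ enum_rank k != 0.
Proof.
move=> hb hc.
have [k hk] : exists k, c k != 0.
  apply/existsP; move: hc; apply: contraR; rewrite negb_exists => /forallP h.
  by apply/eqP/ffunP => k; rewrite ffunE; apply/eqP; move: (h k); rewrite negbK.
rewrite (reindex _ (onW_bij _ (enum_val_bij K))) /=.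
under eq_bigr => i _ do rewrite enum_valK.
apply: base_nz => [i|]; first exact: hb.
by exists (enum_rank k); rewrite enum_rankK.
Qed.

Lemma sum_seq_pred1 (R : nmodType) (T : eqType) (W : seq T) (c : T) (G : T -> R) :
  uniq W -> c \in W -> \sum_(a <- W | c == a) G a = G c.
Proof.
move=> uW cW; rewrite (big_rem c) //= eqxx big1_seq ?addr0 // => a /andP[/eqP <-].
by rewrite mem_rem_uniqF.
Qed.
Section Gen.
Variables (R : realType) (n : nat) (X : {set {set 'I_n}}) (d : nat)
  (K : finType) (Kd : {set 'I_n} -> ZK K).
Local Notation E := (simp X d.+1).

Definition phi (w : K -> R) (c : ZK K) : R := \sum_k (c k)%:~R * w k.

Lemma phiD w c1 c2 : phi w (c1 + c2) = phi w c1 + phi w c2.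
Proof. by rewrite /phi -big_split /=; apply: eq_bigr => k _; rewrite ffunE rmorphD mulrDl. Qed.

Lemma phiN w c : phi w (- c) = - phi w c.
Proof. by rewrite /phi -sumrN; apply: eq_bigr => k _; rewrite ffunE rmorphN mulNr. Qed.

Lemma phi0 w : phi w 0 = 0.
Proof. by rewrite /phi big1 // => k _; rewrite ffunE mul0r. Qed.

Lemma phi_lin w (S : {set {set 'I_n}}) (al : {set 'I_n} -> int) :
  phi w (\sum_(e in S) Kd e *~ al e) = \sum_(e in S) (al e)%:~R * phi w (Kd e).
Proof.
rewrite /phi.
under eq_bigr => k _ do rewrite sum_ffunE rmorph_sum big_distrl.
rewrite exchange_big /=; apply: eq_bigr => e _.
rewrite big_distrr; apply: eq_bigr => k _.
by rewrite ffunMzE mulrzz intrM /=; ring.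
Qed.

Lemma double_sum (Pi : {set {set 'I_n}}) (c : {set 'I_n} -> ZK K)
  (al : {set 'I_n} -> int) (h : ZK K -> R) (W : seq (ZK K)) :
  (forall a, h (- a) = - h a) -> uniq W ->
  (forall t, t \in Pi -> c t \in W) -> (forall t, t \in Pi -> - c t \in W) ->
  (\sum_(t in Pi) (al t)%:~R * h (c t)) *+ 2 =
  \sum_(a <- W) ((\sum_(t in Pi | c t == a) al t
                   - \sum_(t in Pi | c t == - a) al t)%:~R * h a).
Proof.
move=> hodd uW hW hWn.
under [RHS]eq_bigr => a _ do rewrite rmorphB /= !rmorph_sum /= mulrBl !big_distrl /=.
rewrite sumrB.
under [X in X - _]eq_bigr => a _ do rewrite big_mkcondr /=.
under [X in _ - X]eq_bigr => a _ do rewrite big_mkcondr /=.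
rewrite [X in X - _]exchange_big [X in _ - X]exchange_big /=.
under [X in X - _]eq_bigr => t tP do rewrite -big_mkcond /= (sum_seq_pred1 (fun a => (al t)%:~R * h a) uW (hW t tP)).
under [X in _ - X]eq_bigr => t tP.
  under eq_bigr => a _ do rewrite -eqr_oppLR.
  rewrite -big_mkcond /= (sum_seq_pred1 (fun a => (al t)%:~R * h a) uW (hWn t tP)) hodd mulrN.
  over.
by rewrite sumrN opprK mulr2n.
Qed.

End Gen.
Lemma le_sum_nonneg (I : finType) (A : pred I) (F : I -> int) i :
  i \in A -> (forall j, 0 <= F j) -> F i <= \sum_(j in A) F j.
Proof. by move=> iA hF; rewrite (bigD1 i) //= lerDl sumr_ge0. Qed.

Lemma ZK_neg (K : finType) (a : ZK K) : a != 0 -> (a == -a) = false.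
Proof.
move=> a0; apply/negbTE/negP => /eqP h; move/eqP: a0; apply; apply/ffunP => j.
have := congr1 (fun f : ZK K => f j) h; rewrite !ffunE => hh.
have : (a j) *+ 2 == 0 by rewrite mulr2n {2}hh subrr.
by rewrite mulrn_eq0 /= => /eqP.
Qed.

Section Gen2.
Variables (R : realType) (n : nat) (X : {set {set 'I_n}}) (d : nat)
  (K : finType) (Kd : {set 'I_n} -> ZK K).
Local Notation E := (simp X d.+1).
Variable iota : {set 'I_n} -> {set 'I_n} -> int.

Definition gcol t := \sum_(e in E) Kd e *~ iota t e.
Definition gU (Pi : {set {set 'I_n}}) a e :=
  \sum_(t in Pi | gcol t == a) iota t e - \sum_(t in Pi | gcol t == - a) iota t e.
Definition gmap (T : {set {set 'I_n}}) (F : {set 'I_n} -> R -> R)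
    (x : {set 'I_n} -> R) : {set 'I_n} -> R := fun e =>
  if e \in E then
    \sum_(t in T) (iota t e)%:~R * F t (\sum_(e' in E) (iota t e')%:~R * x e')
  else 0.
Definition gbal (P : {set {set {set 'I_n}}}) :=
  forall e f, e \in E -> f \in E ->
  forall Pi, Pi \in P -> forall a : ZK K,
    (Kd e = Kd f -> gU Pi a e = gU Pi a f) /\
    (Kd e = - Kd f -> gU Pi a e = - gU Pi a f).

Lemma inner (w : K -> R) (x : {set 'I_n} -> R) t : (forall e, e \in E -> x e = phi w (Kd e)) ->
  \sum_(e' in E) (iota t e')%:~R * x e' = phi w (gcol t).
Proof. by move=> hx; rewrite /gcol phi_lin; apply: eq_bigr => e eE; rewrite hx. Qed.

Theorem gen_thm (k : nat) (P : {set {set {set 'I_n}}}) :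
  anti_coloring X d Kd -> partition P (simp X k) ->
  (forall F, Wset X k P F -> is_invariant X d Kd (gmap (simp X k) F)) <-> gbal P.
Proof.
move=> hac /and3P[/eqP hcov htriv h0].
have PiT : forall Pi, Pi \in P -> Pi \subset simp X k.
  by move=> Pi PiP; rewrite -hcov; apply: bigcup_sup.
split.
- move=> hinv e f eE fE Pi PiP a.
  case: (eqVneq a 0) => [-> | a0].
    have gU0 : forall g, gU Pi 0 g = 0 by move=> g; rewrite /gU oppr0 subrr.
    by rewrite !gU0 oppr0.
  set A := \sum_(t in simp X k) \sum_j `|gcol t j|.
  set B := \sum_j `|a j|.
  set M : int := 1 + A + B.
  have A0 : 0 <= A by apply: sumr_ge0 => t _; apply: sumr_ge0.
  have hA : forall t, t \in simp X k -> forall j, `|gcol t j| <= A.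
    move=> t tT j; apply: le_trans (le_sum_nonneg (F := fun t => \sum_j `|gcol t j|) tT _).
      by apply: (le_sum_nonneg (F := fun j => `|gcol t j|)).
    by move=> t'; apply: sumr_ge0.
  have hB : forall j, `|a j| <= B by move=> j; apply: (le_sum_nonneg (F := fun j => `|a j|)).
  set w : K -> R := fun j => (M ^+ enum_rank j)%:~R.
  have phiE (c : ZK K) : phi w c = (\sum_j c j * M ^+ enum_rank j)%:~R.
    by rewrite /phi rmorph_sum; apply: eq_bigr => j _; rewrite /= intrM.
  have key : forall c : ZK K, (forall j, `|c j| < M) -> phi w c = 0 -> c = 0.
    move=> c hc; rewrite phiE => /eqP; rewrite intr_eq0; apply: contraTeq => cn0.
    exact: psi_nz.
  have phi_eq : forall t, t \in simp X k -> forall b, (b = a \/ b = - a) ->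
      (phi w (gcol t) == phi w b) = (gcol t == b).
    move=> t tT b hb; apply/eqP/eqP => [h|->//].
    apply/eqP; rewrite -subr_eq0; apply/eqP; apply: key.
      move=> j; rewrite !ffunE.
      have hbj : `|b j| = `|a j| by case: hb => ->; rewrite ?ffunE ?normrN.
      apply: le_lt_trans (ler_normB _ _) _; rewrite hbj.
      apply: le_lt_trans (lerD (hA t tT j) (hB j)) _; by rewrite /M -addrA ltrDr.
    by rewrite phiD phiN h subrr.
  have phia : phi w a != 0.
    apply/eqP => h; move/eqP: a0; apply; apply: key h => j.
    have := lerD A0 (hB j); rewrite add0r => hh; apply: le_lt_trans hh _; by rewrite /M -addrA ltrDr.
  have hneq : phi w a != - phi w a.
    by apply/eqP => h; move/eqP: phia; apply; lra.
  pose g (r : R) : R := if r == phi w a then 1 else if r == - phi w a then -1 else 0.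
  pose F (t : {set 'I_n}) := if t \in Pi then g else (fun _ : R => 0 : R).
  have hW : Wset X k P F.
    split.
      move=> s _ r; rewrite /F; case: ifP => _; last by rewrite oppr0.
      rewrite /g eqr_oppLR eqr_opp.
      case: (eqVneq r (phi w a)) => [->|hr]; first by rewrite (negbTE hneq).
      by case: (eqVneq r (- phi w a)); rewrite ?opprK ?oppr0.
    move=> Pj PjP s t sP tP; rewrite /F.
    case: (eqVneq Pj Pi) => [eqj|ne]; first by subst Pj; rewrite sP tP.
    have dis := trivIsetP htriv Pj Pi PjP PiP ne.
    by rewrite (disjointFr dis sP) (disjointFr dis tP).
  pose x (e : {set 'I_n}) : R := if e \in E then phi w (Kd e) else 0.
  have hxE : forall e, e \in E -> x e = phi w (Kd e) by rewrite /x => e0 ->.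
  have hx : Delta X d Kd x.
    split; first by move=> s sE; rewrite /x (negbTE sE).
    move=> s t sE tE; rewrite !hxE //; split => ->; first by [].
    by rewrite phiN.
  have ycomp : forall g0, g0 \in E -> gmap (simp X k) F x g0 = (gU Pi a g0)%:~R.
    move=> g0 g0E; rewrite /gmap g0E.
    under eq_bigr => t _ do rewrite (inner t hxE).
    transitivity (\sum_(t in simp X k) (if t \in Pi then (iota t g0)%:~R * g (phi w (gcol t)) else 0)).
      by apply: eq_bigr => t _; rewrite /F; case: ifP; rewrite ?mulr0.
    rewrite -big_mkcondr /=.
    rewrite (eq_bigl (fun t => t \in Pi)); last first.
      by move=> t /=; apply/andb_idl => tP; apply: (subsetP (PiT _ PiP)).
    rewrite /gU rmorphB !rmorph_sum /= !big_mkcondr /= -sumrB.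
    apply: eq_bigr => t tP.
    have tT : t \in simp X k by apply: (subsetP (PiT _ PiP)).
    rewrite /g (phi_eq t tT a (or_introl erefl)) -phiN (phi_eq t tT (- a) (or_intror erefl)).
    case: (eqVneq (gcol t) a) => [->|ha]; first by rewrite (ZK_neg a0) mulr1 subr0.
    by case: (eqVneq (gcol t) (- a)) => _; ring.
  have [_ /(_ e f eE fE) [h1 h2]] := hinv F hW x hx.
  split => hK.
    by apply: (@intr_inj R); rewrite -!ycomp // h1.
  by apply: (@intr_inj R); rewrite intrN -!ycomp // h2.
-
move=> hbal F [Fodd Fcls] x [xsupp xD].
split; first by move=> s sE; rewrite /gmap (negbTE sE).
move=> e f eE fE.
pose w (j : K) : R :=
  if [pick e0 in E | Kd e0 == gen j] is Some e0 then x e0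
  else if [pick e0 in E | Kd e0 == - gen j] is Some e0 then - x e0 else 0.
have phigen j : phi w (gen j) = w j.
  rewrite /phi (bigD1 j) //= big1 => [|i ij]; first by rewrite ffunE eqxx /= mul1r addr0.
  by rewrite ffunE (negbTE ij) /= mul0r.
have hxE : forall e0, e0 \in E -> x e0 = phi w (Kd e0).
  move=> e0 e0E; have := hac e0 e0E; rewrite /inBK.
  case/orP => [/eqP hk0 | /existsP [j /orP [/eqP hk0 | /eqP hk0]]].
  - have [_ h] := xD e0 e0 e0E e0E.
    have hh : x e0 = - x e0 by apply: h; rewrite hk0 oppr0.
    rewrite hk0 phi0; lra.
  - rewrite hk0 phigen /w; case: pickP => [e1 /andP[e1E /eqP h1] | hnone].
      by have [h _] := xD e0 e1 e0E e1E; apply: h; rewrite hk0 h1.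
    by have := hnone e0; rewrite e0E hk0 eqxx.
  - rewrite hk0 phiN phigen /w; case: pickP => [e1 /andP[e1E /eqP h1] | _].
      by have [_ h] := xD e0 e1 e0E e1E; apply: h; rewrite hk0 h1.
    case: pickP => [e1 /andP[e1E /eqP h1] | hnone].
      by rewrite opprK; have [h _] := xD e0 e1 e0E e1E; apply: h; rewrite hk0 h1.
    by have := hnone e0; rewrite e0E hk0 eqxx.
rewrite /gmap eE fE.
have decomp : forall g,
    \sum_(t in simp X k) (iota t g)%:~R * F t (\sum_(e' in E) (iota t e')%:~R * x e')
    = \sum_(Pi in P) \sum_(t in Pi) (iota t g)%:~R * F t (phi w (gcol t)).
  move=> g; rewrite -hcov big_trivIset //; apply: eq_bigr => Pi _.
  by apply: eq_bigr => t _; rewrite (inner t hxE).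
pose W (Pi : {set {set 'I_n}}) :=
  undup ([seq gcol t | t <- enum Pi] ++ [seq - gcol t | t <- enum Pi]).
have perPi : forall Pi, Pi \in P -> exists h : ZK K -> R, forall g,
   (\sum_(t in Pi) (iota t g)%:~R * F t (phi w (gcol t))) *+ 2
   = \sum_(a <- W Pi) (gU Pi a g)%:~R * h a.
  move=> Pi PiP.
  have /set0Pn [t0 t0P] : Pi != set0 by apply: contraNneq h0 => <-.
  have t0T : t0 \in simp X k by apply: (subsetP (PiT _ PiP)).
  exists (fun a => F t0 (phi w a)) => g.
  under eq_bigr => t tP do rewrite (Fcls Pi PiP t t0 tP t0P).
  apply: (@double_sum R n K Pi gcol (fun t => iota t g)).
  - by move=> a; rewrite phiN Fodd.
  - exact: undup_uniq.
  - by move=> t tP; rewrite mem_undup mem_cat; apply/orP; left; apply/mapP; exists t; rewrite ?mem_enum.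
  - by move=> t tP; rewrite mem_undup mem_cat; apply/orP; right; apply/mapP; exists t; rewrite ?mem_enum.
rewrite !decomp; split => hK.
  apply: eq_bigr => Pi PiP; have [h hh] := perPi Pi PiP.
  have := hh e; have := hh f.
  have -> : \sum_(a <- W Pi) (gU Pi a e)%:~R * h a = \sum_(a <- W Pi) (gU Pi a f)%:~R * h a.
    by apply: eq_bigr => a _; rewrite (proj1 (hbal e f eE fE Pi PiP a) hK).
  move=> <- /eqP; rewrite -subr_eq0 -mulrnBl mulrn_eq0 /= subr_eq0 => /eqP //.
rewrite -sumrN; apply: eq_bigr => Pi PiP; have [h hh] := perPi Pi PiP.
have := hh e; have := hh f.
have -> : \sum_(a <- W Pi) (gU Pi a e)%:~R * h a = - \sum_(a <- W Pi) (gU Pi a f)%:~R * h a.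
  rewrite -sumrN; apply: eq_bigr => a _; rewrite (proj2 (hbal e f eE fE Pi PiP a) hK).
  by rewrite intrN mulNr.
move=> <- /eqP; rewrite -mulNrn -subr_eq0 -mulrnBl mulrn_eq0 /= subr_eq0 => /eqP //.
Qed.
End Gen2.

Theorem mainTheorem4 (R : realType) (n : nat) (X : {set {set 'I_n}}) (d : nat)
  (K : finType) (Kd : {set 'I_n} -> ZK K)
  (P Q : {set {set {set 'I_n}}}) :
  is_complex X -> anti_coloring X d Kd ->
  partition P (simp X d.+2) -> partition Q (simp X d) ->
  ((forall F : {set 'I_n} -> R -> R, Wset X d.+2 P F ->
       is_invariant X d Kd (upmap X d F)) <-> up_balanced X d Kd P) /\
  ((forall H : {set 'I_n} -> R -> R, Wset X d Q H ->
       is_invariant X d Kd (downmap X d H)) <-> down_balanced X d Kd Q).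
Proof.
move=> _ hac hP hQ; split.
  exact: (@gen_thm R n X d K Kd (fun t e => incid t e) d.+2 P hac hP).
exact: (@gen_thm R n X d K Kd (fun v e => incid e v) d Q hac hQ).
Qed.
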